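(* Let $r\ge1$ and let $A(z)=\sum_{j=0}^rA_jz^{-j-1}$ with $A_j\in\mathfrak g$, the coefficients satisfying the Takiff Lie–Poisson bracket $\{A_{\alpha,i},A_{\beta,j}\}=-C_{ij}^kA_{\alpha+\beta,k}$ if $\alpha+\beta\le r$ and $0$ if $\alpha+\beta>r$. Then for every $0<k<r$ the function $$I_k=\mathrm{res}_{z=0}\big(z^{r+k}\,\mathrm{Tr}\,A(z)^2\big)$$ is a Casimir of this Poisson bracket.
   Context: $\mathfrak g$ is a Lie algebra (e.g. $\mathfrak{gl}_m$) with basis $X_1,\dots,X_N$, structure constants $[X_i,X_j]=C_{ij}^kX_k$, and an invariant nondegenerate form with $\langle X_i,X_j\rangle=\delta_{ij}$ (denoted $\mathrm{Tr}$); $A_{\alpha,i}$ is the $X_i$-component of $A_\alpha$. *)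

(* Defs.v *)
From HB Require Import structures.
From mathcomp Require Import all_boot all_order all_algebra.
From mathcomp Require Import mpoly.
Set Implicit Arguments. Unset Strict Implicit. Unset Printing Implicit Defensive.
Import Order.TTheory GRing.Theory.
Local Open Scope ring_scope.

(* Lie algebra g over a field R with basis X_0..X_{N-1} given by structure
   constants C i j k := C_{ij}^k, i.e. [X_i, X_j] = sum_k C i j k X_k. *)
Section Takiff.
Variables (R : fieldType) (N r : nat).
Variable C : 'I_N -> 'I_N -> 'I_N -> R.

Definition lie_antisym := forall i j k, C i j k = - C j i k.
Definition lie_jacobi := forall i j k l,
  \sum_(m < N) (C i j m * C m k l + C j k m * C m i l + C k i m * C m j l) = 0.
(* the form <X_i, X_j> = delta_ij ("Tr") *)
Definition form (i j : 'I_N) : R := (i == j)%:R.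
Definition form_invariant := forall i j k,
  \sum_(m < N) C i j m * form m k = \sum_(m < N) form i m * C j k m.

(* polynomial functions of the coordinates A_{alpha,i}, alpha = 0..r, i < N *)
Definition Fun := {mpoly R[r.+1 * N]}.
Definition coord (a : 'I_r.+1) (i : 'I_N) : Fun := 'X_(mxvec_index a i).

Definition takiff_coord (a : 'I_r.+1) (i : 'I_N) (b : 'I_r.+1) (j : 'I_N) : Fun :=
  if (a + b <= r)%N then - \sum_(k < N) C i j k *: coord (inord (a + b)) k
  else 0.

(* the Poisson bracket on all polynomial functions: the unique biderivation
   extending takiff_coord *)
Definition pbracket (F G : Fun) : Fun :=
  \sum_(a < r.+1) \sum_(i < N) \sum_(b < r.+1) \sum_(j < N)
    mderiv (mxvec_index a i) F * mderiv (mxvec_index b j) G * takiff_coord a i b j.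

Definition casimir (F : Fun) := forall G : Fun, pbracket F G = 0.

(* A(z) = sum_j A_j z^{-j-1}, written as a polynomial in w = z^{-1};
   component i (along X_i) : sum_j A_{j,i} w^{j+1} *)
Definition Acomp (i : 'I_N) : {poly Fun} :=
  \sum_(j < r.+1) (coord j i)%:P * 'X^(j.+1).
Definition TrA2 : {poly Fun} :=
  \sum_(i < N) \sum_(l < N) (form i l)%:MP%:P * (Acomp i * Acomp l).

(* For p a polynomial in w = z^{-1}, res_{z=0} (z^e p(1/z)) is the coefficient
   of z^{-1}, i.e. of w^{e+1} in p. *)
Definition res_z0_zpow (e : nat) (p : {poly Fun}) : Fun := p`_(e.+1).

Definition I_ (k : nat) : Fun := res_z0_zpow (r + k) TrA2.
End Takiff.

(* Main.v *)
Require Import Defs.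
From HB Require Import structures.
From mathcomp Require Import all_boot all_order all_algebra.
From mathcomp Require Import mpoly zify.
Set Implicit Arguments. Unset Strict Implicit. Unset Printing Implicit Defensive.
Import Order.TTheory GRing.Theory.
Local Open Scope ring_scope.

Lemma mderivXX (R : fieldType) n (u v : 'I_n) :
  mderiv u ('X_v : {mpoly R[n]}) = (u == v)%:R.
Proof.
rewrite mderivX mnm1E eq_sym; case: eqP => [->|_].
  set m := (_ - _)%MM; have -> : m = 0%MM by apply/mnmP=> i; rewrite !mnmE subnn.
  by rewrite mpolyX0 scale1r.
by rewrite scale0r.
Qed.

Lemma mxvec_index_eq m n (a b : 'I_m) (i j : 'I_n) :
  (mxvec_index a i == mxvec_index b j) = (a == b) && (i == j).
Proof.
apply/eqP/andP => [|[/eqP-> /eqP->]//].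
by move/cast_ord_inj/enum_rank_inj => [-> ->].
Qed.
Lemma I_E (R : fieldType) (N r k : nat) :
  I_ R N r k = \sum_(i < N) \sum_(a < r.+1) \sum_(b < r.+1)
     (if (a.+1 + b.+1 == (r + k).+1)%N then Defs.coord R a i * Defs.coord R b i else 0).
Proof.
rewrite /I_ /res_z0_zpow /TrA2 coef_sum; apply: eq_bigr => i _.
rewrite coef_sum (bigD1 i) //= big1 => [|l /negbTE nil]; last first.
  by rewrite coefCM /Defs.form eq_sym nil mpolyC0 mul0r.
rewrite addr0 coefCM /Defs.form eqxx mpolyC1 mul1r /Acomp mulr_suml coef_sum.
apply: eq_bigr => a _; rewrite mulr_sumr coef_sum; apply: eq_bigr => b _.
rewrite !mul_polyC -scalerAl -scalerAr scalerA -exprD coefZ coefXn.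
by rewrite eq_sym; case: eqP => _; rewrite ?mulr1 ?mulr0.
Qed.

Lemma sum_delta (T : finType) (V : pzRingType) (x : T) (F : T -> V) :
  \sum_i (x == i)%:R * F i = F x.
Proof.
rewrite (bigD1 x) //= big1 => [|i /negbTE]; first by rewrite eqxx mul1r addr0.
by rewrite eq_sym => ->; rewrite mul0r.
Qed.

Definition DI (R : fieldType) (N r k : nat) (a0 : 'I_r.+1) (i0 : 'I_N) : Fun R N r :=
  \sum_(b < r.+1) (if (a0.+1 + b.+1 == (r + k).+1)%N then Defs.coord R b i0 else 0).

Lemma dI (R : fieldType) (N r k : nat) a0 i0 :
  mderiv (mxvec_index a0 i0) (I_ R N r k) = @DI R N r k a0 i0 + @DI R N r k a0 i0.
Proof.
rewrite I_E raddf_sum.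
transitivity (\sum_(i < N) \sum_(a < r.+1) \sum_(b < r.+1)
  ((i0 == i)%:R * ((a0 == a)%:R * (if (a.+1 + b.+1 == (r + k).+1)%N then Defs.coord R b i else 0))
  + (i0 == i)%:R * ((a0 == b)%:R * (if (a.+1 + b.+1 == (r + k).+1)%N then Defs.coord R a i else 0)))).
  apply: eq_bigr => i _; rewrite raddf_sum; apply: eq_bigr => a _.
  rewrite raddf_sum; apply: eq_bigr => b _.
  case: ifP => _; last by rewrite raddf0 !mulr0 addr0.
  rewrite /= mderivM /Defs.coord !mderivXX !mxvec_index_eq.
  by case: (a0 =P a); case: (a0 =P b); case: (i0 =P i) => /=; rewrite ?mul1r ?mul0r ?mulr1 ?mulr0 ?addr0 ?add0r.
under eq_bigr do under eq_bigr do rewrite big_split.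
under eq_bigr do rewrite big_split.
rewrite big_split /=; congr (_ + _).
  rewrite (eq_bigr (fun i => (i0 == i)%:R * \sum_(a < r.+1) (a0 == a)%:R *
     \sum_(b < r.+1) (if (a.+1 + b.+1 == (r + k).+1)%N then Defs.coord R b i else 0))).
    by rewrite sum_delta sum_delta.
  move=> i _; rewrite mulr_sumr; apply: eq_bigr => a _; by rewrite !mulr_sumr.
rewrite (eq_bigr (fun i => (i0 == i)%:R * \sum_(b < r.+1) (a0 == b)%:R *
     \sum_(a < r.+1) (if (a.+1 + b.+1 == (r + k).+1)%N then Defs.coord R a i else 0))).
  rewrite sum_delta sum_delta /DI; apply: eq_bigr => a _; by rewrite addnC.
move=> i _; rewrite exchange_big mulr_sumr; apply: eq_bigr => b _; by rewrite !mulr_sumr.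
Qed.

Lemma sum_pick (V : zmodType) n m (F : 'I_n.+1 -> V) :
  \sum_(a < n.+1) (if (a == m :> nat) then F a else 0) = if (m < n.+1)%N then F (inord m) else 0.
Proof.
case: ltnP => hm.
  rewrite (bigD1 (inord m)) /=; last by [].
  rewrite (inordK hm) eqxx big1 ?addr0 // => a /negbTE ha.
  case: eqP => // em; move: ha; suff -> : a = inord m by rewrite eqxx.
  by apply: val_inj; rewrite /= inordK // em.
rewrite big1 // => a _; case: eqP => // em.
by move: (ltn_ord a); rewrite em ltnNge hm.
Qed.

Definition Hq (R : fieldType) (N r : nat) (C : 'I_N -> 'I_N -> 'I_N -> R) (j : 'I_N)
  (p q : 'I_r.+1) : Fun R N r :=
  \sum_(i < N) \sum_(l < N) C i j l *: (Defs.coord R p i * Defs.coord R q l).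

Lemma Sig_form (R : fieldType) (N r k : nat) (C : 'I_N -> 'I_N -> 'I_N -> R) b j :
  (1 <= k)%N ->
  \sum_(a < r.+1) \sum_(i < N) @DI R N r k a i * takiff_coord C a i b j =
  - \sum_(p < r.+1) \sum_(q < r.+1)
      (if (p + q == (r + k).-1 + b)%N then Hq C j p q else 0).
Proof.
move=> hk.
transitivity (\sum_(a < r.+1) \sum_(p < r.+1)
  (if (a.+1 + p.+1 == (r + k).+1)%N && (a + b <= r)%N
   then - Hq C j p (inord (a + b)) else 0)).
  apply: eq_bigr => a _; rewrite /takiff_coord; have [hab|hab] := boolP (a + b <= r)%N; rewrite ?(negbTE hab) ?hab; last first.
    rewrite big1; last by move=> i _; rewrite mulr0.
    by rewrite big1 // => p _; rewrite andbF.
  under eq_bigr do rewrite /DI mulr_suml.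
  rewrite exchange_big; apply: eq_bigr => p _; rewrite andbT.
  case: ifP => _; last by rewrite big1 // => i _; rewrite mul0r.
  rewrite /Hq -sumrN; apply: eq_bigr => i _.
  by rewrite mulrN mulr_sumr; congr (- _); apply: eq_bigr => l _; rewrite -scalerAr.
rewrite exchange_big -sumrN; apply: eq_bigr => p _.
have hp := ltn_ord p; rewrite -!subn1.
rewrite (eq_bigr (fun i : 'I_r.+1 => if (i == ((r + k - 1) - p)%N :> nat)
   then (if (i + b <= r)%N then - Hq C j p (inord (i + b)) else 0) else 0)); last first.
  move=> i _; have -> : (i.+1 + p.+1 == (r + k).+1)%N = (i == ((r + k - 1) - p)%N :> nat).
    by apply/eqP/eqP; lia.
  by case: (_ == _).
rewrite [X in - X](eq_bigr (fun q : 'I_r.+1 => if (q == ((r + k - 1) + b - p)%N :> nat)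
   then Hq C j p q else 0)); last first.
  move=> q _; have -> : (p + q == (r + k - 1)%N + b)%N = (q == ((r + k - 1) + b - p)%N :> nat).
    by apply/eqP/eqP; lia.
  by [].
rewrite !sum_pick.
have -> : ((r + k - 1)%N + b - p = ((r + k - 1)%N - p) + b)%N by lia.
set m := ((r + k - 1)%N - p)%N.
case: (leqP (m + b) r) => h.
  have hm : (m < r.+1)%N by lia.
  by rewrite hm (inordK hm) h ltnS h.
have -> : (m + b < r.+1)%N = false by rewrite ltnS leqNgt h.
rewrite oppr0.
by case: ifP => // hm; rewrite (inordK hm) leqNgt h.
Qed.

Lemma cyclicC (R : fieldType) (N : nat) (C : 'I_N -> 'I_N -> 'I_N -> R) :
  form_invariant C -> forall i j k, C i j k = C j k i.
Proof.
move=> inv i j k; have := inv i j k.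
rewrite (bigD1 k) //= big1 => [|m /negbTE hm]; last by rewrite /Defs.form hm mulr0.
rewrite (bigD1 i) //= big1 => [|m /negbTE hm]; last by rewrite /Defs.form eq_sym hm mul0r.
by rewrite /Defs.form !eqxx mulr1 mul1r !addr0.
Qed.

Lemma Hq_swap (R : fieldType) (N r : nat) (C : 'I_N -> 'I_N -> 'I_N -> R) j (p q : 'I_r.+1) :
  lie_antisym C -> form_invariant C -> Hq C j q p = - Hq C j p q.
Proof.
move=> anti inv; rewrite /Hq exchange_big -sumrN; apply: eq_bigr => i _.
rewrite -sumrN; apply: eq_bigr => l _.
by rewrite (cyclicC inv) anti scaleNr mulrC.
Qed.

Lemma Phi_anti (R : fieldType) (N r : nat) (C : 'I_N -> 'I_N -> 'I_N -> R) j (s : nat) :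
  lie_antisym C -> form_invariant C ->
  \sum_(p < r.+1) \sum_(q < r.+1) (if (p + q == s)%N then Hq C j p q else 0) =
  - \sum_(p < r.+1) \sum_(q < r.+1) (if (p + q == s)%N then Hq C j p q else 0).
Proof.
move=> anti inv; rewrite [LHS]exchange_big -sumrN; apply: eq_bigr => p _.
rewrite -sumrN; apply: eq_bigr => q _.
by rewrite [(q + p)%N]addnC [Hq C j q p](Hq_swap _ _ _ anti inv); case: ifP; rewrite ?oppr0.
Qed.

Unset Implicit Arguments.

Theorem lemma2p6 (R : fieldType) (N r : nat) (C : 'I_N -> 'I_N -> 'I_N -> R) :
  (1 <= r)%N ->
  lie_antisym C -> lie_jacobi C -> form_invariant C ->
  forall k : nat, (0 < k < r)%N -> @casimir R N r C (@I_ R N r k).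
Proof.
move=> hr anti jac inv k /andP[hk _] G; rewrite /pbracket.
under eq_bigr do rewrite exchange_big.
under eq_bigr do under eq_bigr do rewrite exchange_big.
rewrite exchange_big.
under eq_bigr do rewrite exchange_big.
apply: big1 => b _; apply: big1 => j _.
transitivity (mderiv (mxvec_index b j) G *
  \sum_(a < r.+1) \sum_(i < N) (@DI R N r k a i + @DI R N r k a i) * takiff_coord C a i b j).
  rewrite mulr_sumr; apply: eq_bigr => a _; rewrite mulr_sumr; apply: eq_bigr => i _.
  by rewrite dI mulrAC mulrC.
under eq_bigr do under eq_bigr do rewrite mulrDl.
under eq_bigr do rewrite big_split.
rewrite big_split /= Sig_form //.
set P := \sum_(p < r.+1) _.
by rewrite {2}/P (Phi_anti _ _ _ anti inv) -/P opprK addNr mulr0.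
Qed.
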